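(* Let $G$ be a locally compact Abelian group and $(G, \mathbb{R}^d \times H_1, \mathcal{L})$ a cut and project scheme, with $H_1$ a locally compact Abelian group. For $h$ on $\mathbb R^d\times H_1$ write $\omega_h=\sum_{(x,x^\star)\in\mathcal L}h(x^\star)\delta_x$. (i) If $\phi \in \mathcal{S}(\mathbb{R}^d)$, $\psi \in C_c(H_1)$ and $h=\phi \otimes \psi$, then $\omega_h$ is a measure (i.e. $\sum_{x\in L\cap K}|h(x^\star)|<\infty$ for every compact $K\subseteq G$). (ii) For each compact $K \subseteq G$ and compact $W \subseteq H_1$ there exists a constant $C=C(K,W)$ such that for all $\phi \in \mathcal{S}(\mathbb{R}^d)$ and $\psi \in C_c(H_1)$ with $\operatorname{supp}(\psi) \subseteq W$, \[ \| \omega_{\phi \otimes \psi} \|_K \leq C \|\psi\|_\infty \big\| (1+|x|^{2d}) \phi(x) \big\|_\infty . \]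
   Context: Cut and project scheme $(G,H,\mathcal L)$: $\mathcal L\subseteq G\times H$ a lattice (discrete co-compact subgroup) with $\pi_H(\mathcal L)$ dense in $H$ and $\pi_G|_{\mathcal L}$ injective; $L=\pi_G(\mathcal L)$ and $\mathcal L=\{(x,x^\star):x\in L\}$. $\mathcal S(\mathbb R^d)$ is the Schwartz space; $(\phi\otimes\psi)(x,y)=\phi(x)\psi(y)$. For a measure $\mu$ and compact $K$, $\|\mu\|_K=\sup_{t\in G}|\mu|(t+K)$. *)

(* Defs.v *)
From HB Require Import structures.
From mathcomp Require Import all_boot all_order all_algebra.
From mathcomp Require Import all_classical all_reals all_analysis.
Set Implicit Arguments. Unset Strict Implicit. Unset Printing Implicit Defensive.
Import Order.TTheory GRing.Theory Num.Theory.
Import numFieldNormedType.Exports.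
Local Open Scope classical_set_scope.
Local Open Scope ring_scope.

Definition LCA_space (T : topologicalType) : Prop :=
  hausdorff_space T /\ forall x : T, exists U : set T, nbhs x U /\ compact U.

Definition lattice_in (X : zmodType) (nb : X -> set_system X)
  (compactX : set X -> Prop) (Lat : set X) : Prop :=
  [/\ Lat 0, (forall a b, Lat a -> Lat b -> Lat (a - b)),
      (forall z, Lat z -> exists U, nb z U /\ U `&` Lat = [set z])
    & exists K, compactX K /\ forall w, exists l k, Lat l /\ K k /\ w = l + k].

Definition cut_and_project_scheme (R : realType) (d : nat)
  (G H1 : topologicalZmodType) (Lat : set (G * ('rV[R]_d * H1))) : Prop :=
  [/\ LCA_space G, LCA_space H1,
      lattice_in (@nbhs _ (G * ('rV[R]_d * H1))%type)
                 (@compact (G * ('rV[R]_d * H1))%type) Lat,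
      dense [set z.2 | z in Lat]
    & {in Lat &, forall z w, z.1 = w.1 -> z = w}].

Definition eucl2 (R : realType) (d : nat) (x : 'rV[R]_d) : R :=
  \sum_(i < d) (x ord0 i) ^+ 2.

Definition cmod (R : realType) (a b : R) : R := Num.sqrt (a ^+ 2 + b ^+ 2).

Fixpoint dpartial (R : realType) (d : nat) (s : seq 'I_d)
  (f : 'rV[R]_d -> R) : 'rV[R]_d -> R :=
  match s with
  | [::] => f
  | i :: s' => 'D_(delta_mx 0 i) (dpartial s' f)
  end.

Definition schwartz_real (R : realType) (d : nat) (f : 'rV[R]_d -> R) : Prop :=
  forall s : seq 'I_d,
    [/\ continuous (dpartial s f),
        (forall (i : 'I_d) (x : 'rV[R]_d), derivable (dpartial s f) x (delta_mx 0 i))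
      & forall n : nat, exists C : R, forall x : 'rV[R]_d,
          (1 + eucl2 x) ^+ n * `|dpartial s f x| <= C].

(* A complex function phi = phire + i phiim is in S(R^d) iff both parts are. *)
Definition schwartz (R : realType) (d : nat) (phire phiim : 'rV[R]_d -> R) :=
  schwartz_real phire /\ schwartz_real phiim.

Definition csupp (T : topologicalType) (R : realType) (psire psiim : T -> R) : set T :=
  closure [set v | psire v != 0 \/ psiim v != 0].

Definition Cc (T : topologicalType) (R : realType) (psire psiim : T -> R) : Prop :=
  [/\ continuous psire, continuous psiim & compact (csupp psire psiim)].

Local Open Scope ereal_scope.

Definition csup_norm (T : Type) (R : realType) (fre fim : T -> R) : \bar R :=
  ereal_sup (range (fun x => (cmod (fre x) (fim x))%:E)).

(* |omega_h|(A) for h on H = R^d x H1, omega_h = sum_{z in Lat} h(z.2) delta_{z.1} *)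
Definition omega_abs (R : realType) (G H : choiceType) (Lat : set (G * H))
  (habs : H -> R) (A : set G) : \bar R :=
  \esum_(z in [set z | Lat z /\ A z.1]) (habs z.2)%:E.

Definition omega_normK (R : realType) (G : zmodType) (H : choiceType) (Lat : set (G * H))
  (habs : H -> R) (K : set G) : \bar R :=
  ereal_sup (range (fun t : G => omega_abs Lat habs [set (t + k)%R | k in K])).

Definition tensor_abs (R : realType) (d : nat) (H1 : Type)
  (phire phiim : 'rV[R]_d -> R) (psire psiim : H1 -> R) (uv : 'rV[R]_d * H1) : R :=
  (cmod (phire uv.1) (phiim uv.1) * cmod (psire uv.2) (psiim uv.2))%R.

(* Main.v *)
Require Import Defs.
From HB Require Import structures.
From mathcomp Require Import all_boot all_order all_algebra.
From mathcomp Require Import all_classical all_reals all_analysis.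
From mathcomp Require Import finmap ring lra.
Import Order.TTheory GRing.Theory Num.Theory.
Import numFieldNormedType.Exports.
Local Open Scope classical_set_scope.
Local Open Scope ring_scope.
Definition Xp (R : realType) (d : nat) (G H1 : topologicalZmodType) : Type :=
  (G * ('rV[R]_d * H1))%type.
HB.instance Definition _ R d G H1 :=
  Topological.copy (Xp R d G H1) (G * ('rV[R]_d * H1))%type.
HB.instance Definition _ R d G H1 :=
  isPointed.Build (Xp R d G H1) (0 : G * ('rV[R]_d * H1)).

Lemma compact_coverX (R : realType) (d : nat) (G H1 : topologicalZmodType)
  (S : set (G * ('rV[R]_d * H1))) : compact S -> @cover_compact (Xp R d G H1) S.
Proof. by move=> cS; rewrite -compact_cover. Qed.
Ltac prj := first [exact: cvg_fst | exact: cvg_snd | (apply: cvg_comp; [prj | prj])].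

Lemma size_partition (T : eqType) (E : finType) (g : T -> E) (s : seq T) :
  size s = (\sum_(e : E) count (fun z => g z == e) s)%N.
Proof.
elim: s => [|a s IHs] /=; first by rewrite big1.
rewrite big_split /= -IHs (bigD1 (g a)) //= eqxx big1 ?addn0 // => e.
by rewrite eq_sym => /negbTE ->.
Qed.

Lemma subsub (V : zmodType) (a b c : V) : (a - c) - (b - c) = a - b.
Proof. by rewrite opprB addrA subrK. Qed.

Section Main.
Variables (R : realType) (d : nat) (G H1 : topologicalZmodType).
Local Notation X := (G * ('rV[R]_d * H1))%type.

Lemma sub_contX : continuous (fun p : X * X => p.1 - p.2).
Proof.
move=> p.
change ((fun p : X * X => (p.1.1 - p.2.1, (p.1.2.1 - p.2.2.1, p.1.2.2 - p.2.2.2))) @ p --> (p.1.1 - p.2.1, (p.1.2.1 - p.2.2.1, p.1.2.2 - p.2.2.2))).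
apply: (@cvg_pair _ _ _ _ (nbhs (p.1.1 - p.2.1)) (nbhs (p.1.2.1 - p.2.2.1, p.1.2.2 - p.2.2.2))) => /=.
  apply: (@continuous_comp _ _ _ (fun p : X * X => (p.1.1, p.2.1)) (fun q : G * G => q.1 - q.2)); last exact: sub_continuous.
  by apply: cvg_pair; prj.
apply: (@cvg_pair _ _ _ _ (nbhs (p.1.2.1 - p.2.2.1)) (nbhs (p.1.2.2 - p.2.2.2))) => /=.
  apply: (@continuous_comp _ _ _ (fun p : X * X => (p.1.2.1, p.2.2.1)) (fun q : 'rV[R]_d * 'rV[R]_d => q.1 - q.2)); last exact: sub_continuous.
  by apply: (@cvg_pair _ _ _ _ (nbhs p.1.2.1) (nbhs p.2.2.1)); prj.
apply: (@continuous_comp _ _ _ (fun p : X * X => (p.1.2.2, p.2.2.2)) (fun q : H1 * H1 => q.1 - q.2)); last exact: sub_continuous.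
by apply: (@cvg_pair _ _ _ _ (nbhs p.1.2.2) (nbhs p.2.2.2)); prj.
Qed.

Lemma translate_open (O : set X) (y : X) : open O -> open [set w | O (w - y)].
Proof.
move=> oO.
have -> : [set w | O (w - y)] = (fun w => w - y) @^-1` O by [].
apply: open_comp => // w _.
apply: (@continuous_comp _ _ _ (fun w : X => (w, y)) (fun p : X * X => p.1 - p.2)); last exact: sub_contX.
by apply: (@cvg_pair _ _ _ _ (nbhs w) (nbhs y)); [exact: cvg_id | exact: cvg_cst].
Qed.

Lemma small_nbhs (U : set X) : nbhs (0 : X) U ->
  exists O : set X, [/\ open O, O 0 & forall a b, O a -> O b -> U (a - b)].
Proof.
move=> nU.
have : nbhs ((0, 0) : X * X) [set p | U (p.1 - p.2)].
  by apply: (sub_contX (0, 0)); rewrite /= subr0.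
case=> -[A B] /= [nA nB] AB.
have := nA; rewrite nbhsE => -[OA [oOA OA0] OAA].
have := nB; rewrite nbhsE => -[OB [oOB OB0] OBB].
exists (OA `&` OB); split; [exact: openI | by split |].
by move=> a b [Aa _] [_ Bb]; apply: (AB (a, b)); split; [apply: OAA | apply: OBB].
Qed.

Definition CountBound (Lat S : set X) (N : nat) :=
  forall (x : X) (s : seq X), uniq s -> (forall z, z \in s -> Lat z /\ S (z - x)) ->
  (size s <= N)%N.

Lemma uniform_count (Lat U : set X) : nbhs (0 : X) U -> U `&` Lat = [set 0] ->
  (forall a b, Lat a -> Lat b -> Lat (a - b)) ->
  forall S : set X, compact S -> exists N, CountBound Lat S N.
Proof.
move=> nU ULat Lsub S cS.
have [Ob [oO O0 OU]] := @small_nbhs U nU.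
move: (@compact_coverX R d G H1 S cS) => /(_ X S (fun y => [set w | Ob (w - y)])).
case.
- by move=> y _; apply: translate_open.
- by move=> y Sy; exists y => //=; rewrite subrr.
move=> D' _ SD'.
exists (size (enum_fset D')) => x s us sH.
have gex : forall z, exists y, z \in s -> (y \in D' /\ Ob (z - x - y)).
  move=> z; case: (boolP (z \in s)) => zs; last by exists 0.
  have [_ /SD' [y /= yD' Oy]] := sH z zs.
  by exists y.
have [g gH] := choice gex.
rewrite -(size_map g); apply: uniq_leq_size.
  rewrite map_inj_in_uniq // => z1 z2 z1s z2s gz.
  have [_ Ob1] := gH z1 z1s; have [_ Ob2] := gH z2 z2s.
  have := OU _ _ Ob1 Ob2; rewrite gz subsub subsub => U12.
  have L12 : Lat (z1 - z2) by apply: Lsub; [case: (sH z1 z1s) | case: (sH z2 z2s)].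
  have : (U `&` Lat) (z1 - z2) by [].
  by rewrite ULat => /= /subr0_eq.
by move=> y /mapP [z zs ->]; case: (gH z zs).
Qed.

Definition Bc (r : R) : set 'rV[R]_d := [set u | forall i, `|u ord0 i| <= r].

Definition Sr (K : set G) (W : set H1) (r : R) : set X :=
  [set z | K z.1 /\ Bc r z.2.1 /\ W z.2.2].

Lemma doubling (Lat : set X) K W (r : R) N : 0 <= r ->
  CountBound Lat (Sr K W r) N -> CountBound Lat (Sr K W (2 * r)) (2 ^ d * N)%N.
Proof.
move=> r0 CB x s us sH.
pose eps (z : X) : {ffun 'I_d -> bool} := [ffun i => 0 <= (z - x).2.1 ord0 i].
pose c (e : {ffun 'I_d -> bool}) : X := (0, (\row_i (if e i then r else - r), 0)).
rewrite (@size_partition _ _ eps).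
apply: (@leq_trans (\sum_(e : {ffun 'I_d -> bool}) N)).
  apply: leq_sum => e _.
  rewrite -size_filter; apply: (CB (x + c e)); first exact: filter_uniq.
  move=> z; rewrite mem_filter => /andP [/eqP ez zs].
  have [Lz [Kz [Bz Wz]]] := sH z zs.
  split => //.
  have E1 : (z - (x + c e)).1 = z.1 - (x.1 + 0) by [].
  have E2 : (z - (x + c e)).2.1 = z.2.1 - (x.2.1 + \row_i (if e i then r else - r)) by [].
  have E3 : (z - (x + c e)).2.2 = z.2.2 - (x.2.2 + 0) by [].
  split; first by rewrite E1 addr0.
  split; last by rewrite E3 addr0.
  move=> i; rewrite E2 !mxE.
  have := Bz i; rewrite -ez ffunE.
  change ((z - x).2.1 ord0 i) with ((z.2.1 - x.2.1) ord0 i); rewrite !mxE.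
  set u := z.2.1 ord0 i - x.2.1 ord0 i.
  have -> : z.2.1 ord0 i - (x.2.1 ord0 i + (if 0 <= u then r else - r)) = u - (if 0 <= u then r else - r).
    by rewrite /u opprD addrA.
  case: ifP => u0; rewrite !ler_norml => /andP [h1 h2]; apply/andP; split; lra.
by rewrite sum_nat_const card_ffun card_bool card_ord.
Qed.


Definition wgt (u : 'rV[R]_d) : R := (1 + eucl2 u ^+ d)^-1.
Definition aw (j : nat) : R := if j is j'.+1 then ((((2:R) ^+ j') ^+ 2) ^+ d)^-1 else 1.

Lemma eucl2_ge0 (u : 'rV[R]_d) : 0 <= eucl2 u.
Proof. by apply: sumr_ge0 => i _; exact: sqr_ge0. Qed.

Lemma wgt_gt0' (u : 'rV[R]_d) : 0 < 1 + eucl2 u ^+ d.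
Proof. have := exprn_ge0 d (eucl2_ge0 u); lra. Qed.

Lemma wgt_ge0 u : 0 <= wgt u.
Proof. by rewrite /wgt invr_ge0 ltW // wgt_gt0'. Qed.

Lemma wgt_le1 u : wgt u <= 1.
Proof. by rewrite /wgt invf_le1 ?wgt_gt0' //; have := exprn_ge0 d (eucl2_ge0 u); lra. Qed.

Lemma aw_ge0 j : 0 <= aw j.
Proof.
case: j => [|j] /=; first exact: ler01.
by rewrite invr_ge0; apply: exprn_ge0; apply: exprn_ge0; apply: exprn_ge0; lra.
Qed.

Lemma wgt_big (u : 'rV[R]_d) j : ~ Bc (2 ^+ j) u -> wgt u <= aw j.+1.
Proof.
move=> nB.
have [i hi] : exists i, 2 ^+ j < `|u ord0 i|.
  apply: contra_notP nB => h i; rewrite leNgt; apply/negP => hlt; apply: h; by exists i.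
have p2 : 0 < (2:R) ^+ j by apply: exprn_gt0; lra.
have h1 : ((2:R) ^+ j) ^+ 2 <= eucl2 u.
  apply: (@le_trans _ _ (u ord0 i ^+ 2)).
    rewrite -[u ord0 i ^+ 2]real_normK ?num_real //.
    by apply: (@lerXn2r _ 2 (2 ^+ j) `|u ord0 i|); rewrite ?nnegrE ?normr_ge0 ?(ltW p2) ?(ltW hi).
  rewrite /eucl2 (bigD1 i) //= lerDl; apply: sumr_ge0 => k _; exact: sqr_ge0.
rewrite /wgt /aw.
have q : 0 < (((2:R) ^+ j) ^+ 2) ^+ d by apply: exprn_gt0; apply: exprn_gt0.
rewrite lef_pV2 ?posrE ?wgt_gt0' //.
apply: (@le_trans _ _ (eucl2 u ^+ d)); last by lra.
apply: lerXn2r => //; rewrite nnegrE ?eucl2_ge0 //; apply: exprn_ge0; exact: ltW.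
Qed.

Lemma sum_indic (T : eqType) (P : pred T) (s : seq T) :
  \sum_(z <- s) ((P z : nat)%:R : R) = (count P s)%:R.
Proof. by elim: s => [|a s IH]; rewrite ?big_nil ?big_cons //= IH natrD. Qed.

Lemma wgt_point (v : 'rV[R]_d) J : Bc (2 ^+ J) v ->
  wgt v <= \sum_(j < J.+1) aw j * ((`[< Bc (2 ^+ j) v >] : nat)%:R).
Proof.
elim: J => [|J IH] B.
  by rewrite big_ord1 /= asboolT // mul1r; exact: wgt_le1.
rewrite big_ord_recr.
case: (pselect (Bc (2 ^+ J) v)) => BJ.
  apply: le_trans (IH BJ) _; rewrite lerDl.
  apply: mulr_ge0; [exact: aw_ge0 | exact: ler0n].
rewrite (asboolT B) mulr1; apply: le_trans (@wgt_big v J BJ) _; rewrite lerDr.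
by apply: sumr_ge0 => j _; apply: mulr_ge0; [exact: aw_ge0 | exact: ler0n].
Qed.

Lemma geo2 J : \sum_(j < J) ((2:R) ^+ j)^-1 = 2 - 2 * ((2:R) ^+ J)^-1.
Proof.
elim: J => [|J IH]; first by rewrite big_ord0 expr0 invr1; lra.
rewrite big_ord_recr /= IH exprS.
have : (2:R) ^+ J != 0 by rewrite expf_neq0 //; lra.
move=> h; field; rewrite h /=; lra.
Qed.

Lemma two_le_b : (0 < d)%N -> 2 <= (2:R) ^+ d.
Proof.
move=> dpos; rewrite -(prednK dpos) exprS.
have : 1 <= (2:R) ^+ d.-1 by apply: exprn_ege1; lra.
lra.
Qed.

Lemma geom (J : nat) : (0 < d)%N || (J == 0)%N ->
  \sum_(j < J.+1) aw j * ((2 ^ d) ^ j)%:R <= 1 + 2 * 2 ^+ d.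
Proof.
have b0 : 0 <= (2:R) ^+ d by apply: exprn_ge0; lra.
rewrite big_ord_recl expn0 (_ : aw ord0 = 1) // mul1r.
set S := \sum_(i < J) _.
case/orP => [dpos | /eqP J0]; last by rewrite /S J0 big_ord0; lra.
have b2 := two_le_b dpos.
suff : S <= 2 * (2:R) ^+ d by lra.
rewrite /S.
have two0 : (0:R) < 2 by lra.
set b := (2:R) ^+ d in b0 b2 *.
have bpos : 0 < b := lt_le_trans two0 b2.
apply: (@le_trans _ _ (\sum_(i < J) b * ((2:R) ^+ i)^-1)).
  apply: ler_sum => j _.
  rewrite !lift0 (_ : aw j.+1 = ((((2:R) ^+ j) ^+ 2) ^+ d)^-1) // natrX natrX -/b.
  have bj : 0 < b ^+ j := exprn_gt0 j bpos.
  have tj : 0 < (2:R) ^+ j := exprn_gt0 j two0.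
  have -> : ((2:R) ^+ j ^+ 2) ^+ d = (b ^+ j) ^+ 2 by rewrite exprAC /b; congr (_ ^+ 2); exact: exprAC.
  have -> : ((b ^+ j) ^+ 2)^-1 * b ^+ j.+1 = b * (b ^+ j)^-1.
    have H : forall (bb y : R), 0 < y -> (y ^+ 2)^-1 * (bb * y) = bb * y^-1.
      by move=> bb y yp; field; rewrite gt_eqF.
    by rewrite [b ^+ j.+1]exprS H.
  apply: ler_wpM2l; first exact: ltW bpos.
  by rewrite lef_pV2 ?posrE //; apply: lerXn2r; rewrite ?nnegrE ?(ltW two0) ?(ltW bpos).
rewrite -mulr_sumr geo2 mulrC ler_pM2r; last exact: bpos.
have : 0 <= ((2:R) ^+ J)^-1 by rewrite invr_ge0; apply: exprn_ge0; lra.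
lra.
Qed.

Lemma iter_count (Lat : set X) K W N0 : CountBound Lat (Sr K W 1) N0 ->
  forall j, CountBound Lat (Sr K W (2 ^+ j)) ((2 ^ d) ^ j * N0)%N.
Proof.
move=> CB; elim=> [|j IH]; first by rewrite expr0 expn0 mul1n.
rewrite exprS expnS -mulnA; apply: doubling => //; apply: exprn_ge0; lra.
Qed.

Lemma le_sum_seq (T : eqType) (F : T -> R) (s : seq T) z :
  (forall y, 0 <= F y) -> z \in s -> F z <= \sum_(y <- s) F y.
Proof.
move=> F0; elim: s => [//|a s IH]; rewrite in_cons big_cons => /orP [/eqP -> | zs].
  by rewrite lerDl; apply: sumr_ge0.
by apply: le_trans (IH zs) _; rewrite lerDr.
Qed.

Lemma key_sum (Lat : set X) K W N0 : CountBound Lat (Sr K W 1) N0 ->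
  forall (x : X) (s : seq X), uniq s ->
  (forall z, z \in s -> [/\ Lat z, K (z - x).1 & W (z - x).2.2]) ->
  \sum_(z <- s) wgt (z - x).2.1 <= N0%:R * (1 + 2 * 2 ^+ d).
Proof.
move=> CB x s us sH.
have [J [HJd HJ]] : exists J, ((0 < d)%N || (J == 0)%N) /\
    forall z, z \in s -> Bc (2 ^+ J) (z - x).2.1.
  case: (posnP d) => [d0|dpos].
    exists 0%N; split; first by rewrite eqxx orbT.
    by move=> z _ i; exfalso; have := ltn_ord i; move: (i : nat) => n; rewrite d0.
  pose M := \sum_(z <- s) \sum_(i < d) `|(z - x).2.1 ord0 i|.
  exists (Num.Def.trunc M).+1; split; first by apply/orP; left.
  move=> z zs i.
  apply: (@le_trans _ _ M).
    apply: (@le_trans _ _ (\sum_(i < d) `|(z - x).2.1 ord0 i|)).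
      by apply: (@le_sum_seq _ (fun i => `|(z - x).2.1 ord0 i|)) => //; rewrite mem_index_enum.
    apply: (@le_sum_seq _ (fun z => \sum_(i < d) `|(z - x).2.1 ord0 i|)) => // y.
    by apply: sumr_ge0.
  apply: (@le_trans _ _ (Num.Def.trunc M).+1%:R).
    exact: ltW (truncnS_gt M).
  by rewrite -natrX ler_nat ltnW // ltn_expl.
apply: (@le_trans _ _ (\sum_(z <- s) \sum_(j < J.+1)
          aw j * ((`[< Bc (2 ^+ j) (z - x).2.1 >] : nat)%:R))).
  rewrite big_seq [X in _ <= X]big_seq; apply: ler_sum => z zs.
  by apply: wgt_point; apply: HJ.
rewrite exchange_big /=.
apply: (@le_trans _ _ (\sum_(j < J.+1) aw j * ((2 ^ d) ^ j * N0)%:R)).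
  apply: ler_sum => j _.
  rewrite -mulr_sumr (@sum_indic _ (fun z => `[< Bc (2 ^+ j) (z - x).2.1 >]) s).
  apply: ler_wpM2l; first exact: aw_ge0.
  rewrite ler_nat -size_filter.
  apply: (@iter_count Lat K W N0 CB j x); first exact: filter_uniq.
  move=> z; rewrite mem_filter => /andP [/asboolP Bz zs].
  have [Lz Kz Wz] := sH z zs.
  by split => //; split => //; split.
have -> : \sum_(j < J.+1) aw j * ((2 ^ d) ^ j * N0)%:R =
    N0%:R * \sum_(j < J.+1) aw j * ((2 ^ d) ^ j)%:R.
  by rewrite mulr_sumr; apply: eq_bigr => j _; rewrite natrM; ring.
by apply: ler_wpM2l; [exact: ler0n | exact: geom].
Qed.

Lemma cmodM (c a b : R) : cmod (c * a) (c * b) = `|c| * cmod a b.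
Proof.
by rewrite /cmod !exprMn -mulrDr sqrtrM ?sqr_ge0 // sqrtr_sqr.
Qed.

Lemma cmod_ge0 (a b : R) : 0 <= cmod a b.
Proof. exact: sqrtr_ge0. Qed.

Lemma cmod00 : cmod 0 0 = (0 : R).
Proof. by rewrite /cmod expr0n /= addr0 sqrtr0. Qed.

Lemma cmod_le (a b : R) : cmod a b <= `|a| + `|b|.
Proof.
rewrite /cmod -(@ger0_norm _ (`|a| + `|b|)); last by apply: addr_ge0.
rewrite -sqrtr_sqr ler_sqrt; last by rewrite sqr_ge0.
have ha : `|a| ^+ 2 = a ^+ 2 by rewrite real_normK ?num_real.
have hb : `|b| ^+ 2 = b ^+ 2 by rewrite real_normK ?num_real.
have := normr_ge0 a; have := normr_ge0 b.
nra.
Qed.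

Lemma core_bound (Lat : set X) K W N0 : CountBound Lat (Sr K W 1) N0 ->
  forall (phire phiim : 'rV[R]_d -> R) (psire psiim : H1 -> R) (p q : R) (t : G) (s : seq X),
  uniq s -> (forall z, z \in s -> Lat z /\ K (z.1 - t)) ->
  csupp psire psiim `<=` W ->
  (forall z, z \in s -> cmod (psire z.2.2) (psiim z.2.2) <= p) ->
  (forall z, z \in s -> cmod ((1 + eucl2 z.2.1 ^+ d) * phire z.2.1)
                             ((1 + eucl2 z.2.1 ^+ d) * phiim z.2.1) <= q) ->
  0 <= p -> 0 <= q ->
  \sum_(z <- s) tensor_abs phire phiim psire psiim z.2 <= N0%:R * (1 + 2 * 2 ^+ d) * p * q.
Proof.
move=> CB phire phiim psire psiim p q t s us sH sW Hp Hq p0 q0.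
pose x : X := (t, (0, 0)).
pose P := fun z : X => `[< W z.2.2 >].
apply: (@le_trans _ _ (\sum_(z <- s) (if P z then p * q * wgt z.2.1 else 0))).
  rewrite big_seq [X in _ <= X]big_seq; apply: ler_sum => z zs.
  rewrite /tensor_abs /P.
  case: (pselect (W z.2.2)) => Wz.
    rewrite asboolT //.
    have -> : cmod (phire z.2.1) (phiim z.2.1) =
        wgt z.2.1 * cmod ((1 + eucl2 z.2.1 ^+ d) * phire z.2.1)
                         ((1 + eucl2 z.2.1 ^+ d) * phiim z.2.1).
      rewrite cmodM ger0_norm; last exact: ltW (wgt_gt0' _).
      by rewrite /wgt mulrA mulVf ?mul1r // gt_eqF // wgt_gt0'.
    have h1 := Hp z zs; have h2 := Hq z zs; have w0 := wgt_ge0 z.2.1.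
    have c1 := cmod_ge0 (psire z.2.2) (psiim z.2.2).
    have c2 := cmod_ge0 ((1 + eucl2 z.2.1 ^+ d) * phire z.2.1) ((1 + eucl2 z.2.1 ^+ d) * phiim z.2.1).
    have -> : p * q * wgt z.2.1 = wgt z.2.1 * q * p by ring.
    apply: ler_pM => //; first exact: mulr_ge0.
    exact: ler_wpM2l.
  rewrite asboolF //.
  have e1 : psire z.2.2 = 0.
    apply: contra_notP Wz => /eqP h; apply: sW; apply: subset_closure; by left.
  have e2 : psiim z.2.2 = 0.
    apply: contra_notP Wz => /eqP h; apply: sW; apply: subset_closure; by right.
  by rewrite e1 e2 cmod00 mulr0.
rewrite -big_mkcond /= -big_filter -mulr_sumr.
have -> : N0%:R * (1 + 2 * 2 ^+ d) * p * q = (p * q) * (N0%:R * (1 + 2 * 2 ^+ d)) by ring.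
apply: ler_wpM2l; first exact: mulr_ge0.
have E : forall z : X, (z - x).2.1 = z.2.1 := fun z => subr0 z.2.1.
under eq_bigr => z _ do rewrite -E.
apply: (@key_sum Lat K W N0 CB); first exact: filter_uniq.
move=> z; rewrite mem_filter => /andP [/asboolP Wz zs].
have [Lz Kz] := sH z zs.
split => //.
have E3 : (z - x).2.2 = z.2.2 := subr0 z.2.2.
by rewrite E3.
Qed.

Lemma exists_bound (T : eqType) (F : T -> R) (P : \bar R) (s : seq T) :
  (0 <= P)%E -> (forall z, z \in s -> ((F z)%:E <= P)%E) -> (forall z, 0 <= F z) ->
  exists p, [/\ 0 <= p, (forall z, z \in s -> F z <= p) & (p%:E <= P)%E].
Proof.
move=> P0 + F0; elim: s => [|a s IH] FP.
  by exists 0; split.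
have [p [p0 ps pP]] : exists p, [/\ 0 <= p, (forall z, z \in s -> F z <= p) & (p%:E <= P)%E].
  by apply: IH => z zs; apply: FP; rewrite in_cons zs orbT.
case: (leP (F a) p) => h.
  exists p; split => // z; rewrite in_cons => /orP [/eqP -> // | zs].
  exact: ps.
exists (F a); split => //.
- move=> z; rewrite in_cons => /orP [/eqP -> // | zs].
  exact: le_trans (ps z zs) (ltW h).
- by apply: FP; rewrite in_cons eqxx.
Qed.

Lemma esum_le (A : set X) (f : X -> R) (B : \bar R) :
  (forall s : seq X, uniq s -> (forall z, z \in s -> A z) ->
     ((\sum_(z <- s) f z)%:E <= B)%E) ->
  (\esum_(z in A) (f z)%:E <= B)%E.
Proof.
move=> H; apply/ereal_supP => _ [F [finF FA] <-].
rewrite fsbig_finite //= sumEFin; apply: H; first exact: fset_uniq.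
by move=> z; rewrite in_fset_set // => /set_mem; apply: FA.
Qed.

Lemma bounded_cont (T : topologicalType) (f : T -> R) (A : set T) :
  continuous f -> compact A -> (forall v, ~ A v -> f v = 0) ->
  exists M, forall v, `|f v| <= M.
Proof.
move=> fc cA f0.
have cfA : compact (f @` A) by apply: continuous_compact => //; exact: continuous_subspaceT.
have [M [_ HM]] := compact_bounded cfA.
exists (`|M| + 1) => v.
case: (pselect (A v)) => Av.
  apply: (HM (`|M| + 1)); last by exists v.
  have := ler_norm M; lra.
by rewrite f0 // normr0; have := normr_ge0 M; lra.
Qed.

Lemma compact_Sr (K : set G) (W : set H1) : compact K -> compact W -> compact (Sr K W 1).
Proof.
move=> cK cW.
have cB : compact (Bc 1).
  have -> : Bc 1 = [set v : 'rV[R]_d | forall i, `[-1, 1]%classic (v ord0 i)].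
    apply/seteqP; split => v h i; move: (h i); rewrite /= in_itv /= ler_norml; exact: id.
  by apply: (@rV_compact R d (fun _ => `[-1, 1]%classic)) => i; exact: segment_compact.
exact: compact_setX cK (compact_setX cB cW).
Qed.

Lemma weight_bound (f : 'rV[R]_d -> R) C1 :
  (forall x, (1 + eucl2 x) ^+ d * `|f x| <= C1) ->
  forall x, `|(1 + eucl2 x ^+ d) * f x| <= 2 * C1.
Proof.
move=> h x; have e0 := eucl2_ge0 x.
have h1 : 1 <= (1 + eucl2 x) ^+ d by apply: exprn_ege1; lra.
have h2 : eucl2 x ^+ d <= (1 + eucl2 x) ^+ d.
  by apply: lerXn2r; rewrite ?nnegrE; lra.
have h3 := h x; have h4 := normr_ge0 (f x).
have h5 := exprn_ge0 d e0.
rewrite normrM ger0_norm; last lra.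
nra.
Qed.

Lemma psi_zero (psire psiim : H1 -> R) v :
  ~ csupp psire psiim v -> psire v = 0 /\ psiim v = 0.
Proof.
move=> nv; split.
  by apply: contra_notP nv => /eqP h; apply: subset_closure; left.
by apply: contra_notP nv => /eqP h; apply: subset_closure; right.
Qed.

Lemma part_ii (Lat U : set X) : nbhs (0 : X) U -> U `&` Lat = [set 0] ->
  (forall a b, Lat a -> Lat b -> Lat (a - b)) ->
  forall (K : set G) (W : set H1), compact K -> compact W ->
     exists C : R,
       forall (phire phiim : 'rV[R]_d -> R) (psire psiim : H1 -> R),
         schwartz phire phiim -> Cc psire psiim ->
         csupp psire psiim `<=` W ->
         (omega_normK Lat (tensor_abs phire phiim psire psiim) K
          <= C%:E * csup_norm psire psiim
               * csup_norm (fun x => ((1 + eucl2 x ^+ d) * phire x)%R)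
                           (fun x => ((1 + eucl2 x ^+ d) * phiim x)%R))%E.
Proof.
move=> nU ULat Lsub K W cK cW.
have [N0 CB] := @uniform_count Lat U nU ULat Lsub _ (@compact_Sr K _ cK cW).
have C0 : 0 <= N0%:R * (1 + 2 * (2:R) ^+ d).
  by apply: mulr_ge0; [exact: ler0n | have := exprn_ge0 d (ler0n R 2); lra].
exists (N0%:R * (1 + 2 * 2 ^+ d)) => phire phiim psire psiim _ _ sW.
set P := csup_norm psire psiim.
set Q := csup_norm _ _.
have P0 : (0 <= P)%E.
  apply: le_trans (_ : (cmod (psire 0) (psiim 0))%:E <= _)%E.
    exact: cmod_ge0.
  by apply: ereal_sup_ubound; exists 0.
have Q0 : (0 <= Q)%E.
  apply: le_trans (_ : (cmod ((1 + eucl2 0 ^+ d) * phire 0) ((1 + eucl2 0 ^+ d) * phiim 0))%:E <= _)%E.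
    exact: cmod_ge0.
  by apply: ereal_sup_ubound; exists 0.
apply/ereal_supP => _ [t _ <-].
apply: esum_le => s us sA.
have [p [p0 ps pP]] := @exists_bound _ (fun z : X => cmod (psire z.2.2) (psiim z.2.2)) P s P0
   (fun z _ => ereal_sup_ubound (ex_intro2 _ _ z.2.2 I erefl)) (fun z => cmod_ge0 _ _).
have [q [q0 qs qQ]] := @exists_bound _
   (fun z : X => cmod ((1 + eucl2 z.2.1 ^+ d) * phire z.2.1) ((1 + eucl2 z.2.1 ^+ d) * phiim z.2.1)) Q s Q0
   (fun z _ => ereal_sup_ubound (ex_intro2 _ _ z.2.1 I erefl)) (fun z => cmod_ge0 _ _).
apply: (@le_trans _ _ ((N0%:R * (1 + 2 * 2 ^+ d) * p * q)%:E)).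
  rewrite lee_fin; apply: (@core_bound Lat K W N0 CB phire phiim psire psiim p q t s) => //.
  move=> z zs; have [Lz [k Kk e]] := sA z zs; split => //.
  by rewrite -e addrC addKr.
rewrite !EFinM; apply: lee_pmul => //.
  by rewrite -!EFinM; exact: (mulr_ge0 C0 p0).
by apply: lee_pmul; [rewrite -EFinM; exact: C0 | exact: p0 | exact: lexx | exact: pP].
Qed.

Lemma part_i (Lat U : set X) : nbhs (0 : X) U -> U `&` Lat = [set 0] ->
  (forall a b, Lat a -> Lat b -> Lat (a - b)) ->
  forall (phire phiim : 'rV[R]_d -> R) (psire psiim : H1 -> R),
     schwartz phire phiim -> Cc psire psiim ->
     forall K : set G, compact K ->
       (omega_abs Lat (tensor_abs phire phiim psire psiim) K < +oo)%E.
Proof.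
move=> nU ULat Lsub phire phiim psire psiim [Sre Sim] [cre cim cW] K cK.
have [N0 CB] := @uniform_count Lat U nU ULat Lsub _ (@compact_Sr K _ cK cW).
have [Mre hre] : exists M, forall v, `|psire v| <= M.
  by apply: (@bounded_cont _ psire _ cre cW) => v /psi_zero [].
have [Mim him] : exists M, forall v, `|psiim v| <= M.
  by apply: (@bounded_cont _ psiim _ cim cW) => v /psi_zero [].
have [_ _ bre] := Sre [::]; have [C1 hC1] := bre d.
have [_ _ bim] := Sim [::]; have [C2 hC2] := bim d.
have wre := @weight_bound phire C1 hC1.
have wim := @weight_bound phiim C2 hC2.
pose p := Mre + Mim; pose q := 2 * C1 + 2 * C2.
have p0 : 0 <= p.
  by have := hre 0; have := him 0; have := normr_ge0 (psire 0); have := normr_ge0 (psiim 0); rewrite /p; lra.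
have q0 : 0 <= q.
  have c1 : 0 <= 2 * C1 := le_trans (normr_ge0 _) (wre 0).
  have c2 : 0 <= 2 * C2 := le_trans (normr_ge0 _) (wim 0).
  rewrite /q; lra.
apply: le_lt_trans (_ : _ <= (N0%:R * (1 + 2 * 2 ^+ d) * p * q)%:E)%E (ltry _).
apply: esum_le => s us sA.
rewrite lee_fin; apply: (@core_bound Lat K (csupp psire psiim) N0 CB phire phiim psire psiim p q 0 s) => //.
- by move=> z zs; have [Lz Kz] := sA z zs; split => //; rewrite subr0.
- move=> z _; apply: le_trans (cmod_le _ _) _.
  by have := hre z.2.2; have := him z.2.2; rewrite /p; lra.
- move=> z _; apply: le_trans (cmod_le _ _) _.
  by have := wre z.2.1; have := wim z.2.1; rewrite /q; lra.
Qed.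

End Main.

Theorem lemma5p2 (R : realType) (d : nat) (G H1 : topologicalZmodType)
  (Lat : set (G * ('rV[R]_d * H1))) :
  cut_and_project_scheme Lat ->
  (* (i) omega_{phi (x) psi} is a measure *)
  (forall (phire phiim : 'rV[R]_d -> R) (psire psiim : H1 -> R),
     schwartz phire phiim -> Cc psire psiim ->
     forall K : set G, compact K ->
       (omega_abs Lat (tensor_abs phire phiim psire psiim) K < +oo)%E)
  /\
  (* (ii) uniform estimate *)
  (forall (K : set G) (W : set H1), compact K -> compact W ->
     exists C : R,
       forall (phire phiim : 'rV[R]_d -> R) (psire psiim : H1 -> R),
         schwartz phire phiim -> Cc psire psiim ->
         csupp psire psiim `<=` W ->
         (omega_normK Lat (tensor_abs phire phiim psire psiim) K
          <= C%:E * csup_norm psire psiim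
               * csup_norm (fun x => ((1 + eucl2 x ^+ d) * phire x)%R)
                           (fun x => ((1 + eucl2 x ^+ d) * phiim x)%R))%E).
Proof.
case=> _ _ [L0 Lsub Ldisc _] _ _.
have [U [nU ULat]] := Ldisc 0 L0.
split.
  exact: (@part_i R d G H1 Lat U nU ULat Lsub).
exact: (@part_ii R d G H1 Lat U nU ULat Lsub).
Qed.
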